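(* The labelled rule (C), with premise $\Gamma, \mathbf{k}\leq \Diamond^{b}\mathbf{j} \vdash \Diamond \mathbf{k}\leq \mathbf{m}, \Delta$ and conclusion $\Gamma, \mathbf{h}\leq \Diamond\mathbf{j} \vdash \Diamond^{b}\mathbf{h}\leq \mathbf{m}, \Delta$ (where $\mathbf{k}$ does not occur in $\Gamma,\Delta$), is sound on the canonical extension $\mathbb{A}^\delta$ of any $\mathcal{L}$-algebra $\mathbb{A}$ such that $\mathbb{A}\models \Diamond\Box p\leq\Box\Diamond p$.
   Context: An $\mathcal{L}$-algebra is a bounded lattice with a finitely join-preserving $\Diamond$ and finitely meet-preserving $\Box$; its canonical extension $\mathbb{A}^\delta=(L^\delta,\Box^\pi,\Diamond^\sigma)$ is complete, with $\Diamond^\sigma$ having a right adjoint $\blacksquare$ and $\Box^\pi$ having a left adjoint denoted $\Diamond^{b}$ ($\Diamond^{b}u\leq v$ iff $u\leq\Box v$). Nominals range over a completely join-generating subset and conominals over a completely meet-generating subset of $\mathbb{A}^\delta$. A sequent $\Gamma\vdash\Delta$ of inequalities (labelled formulas such as $\mathbf{j}\leq A$, $A\leq\mathbf{m}$ and pure structures such as $\mathbf{j}\leq\mathbf{T}$, $\mathbf{T}\leq\mathbf{m}$) is interpreted as: every assignment of proposition variables, nominals and conominals satisfying all inequalities in $\Gamma$ satisfies some inequality in $\Delta$. Soundness uses that the axiom (C) is canonical (hence valid on $\mathbb{A}^\delta$) and that on $\mathbb{A}^\delta$ it is equivalent to $\forall\mathbf{j}\forall\mathbf{m}(\Diamond\Diamond^{b}\mathbf{j}\leq\mathbf{m}\Rightarrow\Diamond^{b}\Diamond\mathbf{j}\leq\mathbf{m})$.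 *)

(* Defs.v *)
From HB Require Import structures.
From Stdlib Require Import List.
From mathcomp Require Import all_boot all_order.
Set Implicit Arguments. Unset Strict Implicit. Unset Printing Implicit Defensive.
Import Order.Theory.
Local Open Scope order_scope.

Section Bounds.
Context {d : Order.disp_t} {T : porderType d}.
Definition is_ub (S : T -> Prop) (x : T) := forall y, S y -> y <= x.
Definition is_lb (S : T -> Prop) (x : T) := forall y, S y -> x <= y.
Definition is_lub (S : T -> Prop) (x : T) := is_ub S x /\ forall z, is_ub S z -> x <= z.
Definition is_glb (S : T -> Prop) (x : T) := is_lb S x /\ forall z, is_lb S z -> z <= x.
End Bounds.

Definition complete_lattice {d} (T : porderType d) :=
  forall S : T -> Prop, exists x, is_lub S x.

Definition is_L_algebra {d} {A : tbLatticeType d} (dia box : A -> A) :=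
  [/\ dia \bot = \bot, (forall a b, dia (a `|` b) = dia a `|` dia b),
      box \top = \top & (forall a b, box (a `&` b) = box a `&` box b)].

Section CanExt.
Context {dA : Order.disp_t} {A : tbLatticeType dA}
        {dC : Order.disp_t} {C : tbLatticeType dC} (e : A -> C).

Definition img (S : A -> Prop) : C -> Prop := fun x => exists a, S a /\ x = e a.

Definition lattice_embedding :=
  [/\ injective e, e \bot = \bot, e \top = \top,
      (forall a b, e (a `&` b) = e a `&` e b) & (forall a b, e (a `|` b) = e a `|` e b)].

Definition closed_el (k : C) := exists S : A -> Prop, is_glb (img S) k.
Definition open_el (o : C) := exists S : A -> Prop, is_lub (img S) o.

Definition dense :=
  forall u : C, is_lub (fun k => closed_el k /\ k <= u) u /\
                is_glb (fun o => open_el o /\ u <= o) u.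

Definition compact :=
  forall (S T : A -> Prop) (x y : C), is_glb (img S) x -> is_lub (img T) y -> x <= y ->
  exists (s t : seq A), (forall a, a \in s -> S a) /\ (forall b, b \in t -> T b) /\
     \meet_(a <- s) a <= \join_(b <- t) b.

Definition canonical_extension :=
  [/\ complete_lattice C, lattice_embedding, dense & compact].

Definition sigma_ext (f : A -> A) (fs : C -> C) :=
  forall u : C, is_lub (fun x => exists k, closed_el k /\ k <= u /\
                   is_glb (fun y => exists a, k <= e a /\ y = e (f a)) x) (fs u).

Definition pi_ext (f : A -> A) (fp : C -> C) :=
  forall u : C, is_glb (fun x => exists o, open_el o /\ u <= o /\
                   is_lub (fun y => exists a, e a <= o /\ y = e (f a)) x) (fp u).
End CanExt.

Definition compl_join_generating {d} {C : porderType d} (J : C -> Prop) :=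
  forall u : C, is_lub (fun k => J k /\ k <= u) u.
Definition compl_meet_generating {d} {C : porderType d} (M : C -> Prop) :=
  forall u : C, is_glb (fun o => M o /\ u <= o) u.

(* terms: proposition variables, nominals, conominals, lattice connectives,
   diamond, box, the left adjoint of box (Diab) and the right adjoint of diamond (Black) *)
Inductive term :=
  | TVar of nat | TNom of nat | TConom of nat | TTop | TBot
  | TMeet of term & term | TJoin of term & term
  | TDia of term | TBox of term | TDiab of term | TBlack of term.

Inductive ineq := Ineq of term & term.

Fixpoint nom_occurs (k : nat) (t : term) : bool :=
  match t with
  | TNom i => i == k
  | TVar _ | TConom _ | TTop | TBot => false
  | TMeet s u | TJoin s u => nom_occurs k s || nom_occurs k u
  | TDia s | TBox s | TDiab s | TBlack s => nom_occurs k s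
  end.

Definition nom_occurs_ineq k (phi : ineq) :=
  let: Ineq s t := phi in nom_occurs k s || nom_occurs k t.

Definition nom_occurs_seq k (G : seq ineq) := has (nom_occurs_ineq k) G.

Section Semantics.
Context {d : Order.disp_t} {C : tbLatticeType d}
        (dias boxp diab black : C -> C).

Record assignment := Assignment {
  a_var : nat -> C; a_nom : nat -> C; a_conom : nat -> C }.

Fixpoint interp (v : assignment) (t : term) : C :=
  match t with
  | TVar p => a_var v p
  | TNom i => a_nom v i
  | TConom i => a_conom v i
  | TTop => \top
  | TBot => \bot
  | TMeet s u => interp v s `&` interp v u
  | TJoin s u => interp v s `|` interp v u
  | TDia s => dias (interp v s)
  | TBox s => boxp (interp v s)
  | TDiab s => diab (interp v s)
  | TBlack s => black (interp v s)
  end.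

Definition holds (v : assignment) (phi : ineq) : Prop :=
  let: Ineq s t := phi in interp v s <= interp v t.

Definition seq_valid (J M : C -> Prop) (G D : seq ineq) : Prop :=
  forall v : assignment, (forall i, J (a_nom v i)) -> (forall i, M (a_conom v i)) ->
    (forall phi, Stdlib.Lists.List.In phi G -> holds v phi) ->
    exists psi, Stdlib.Lists.List.In psi D /\ holds v psi.
End Semantics.

(* Main.v *)
Require Import Defs.
From HB Require Import structures.
From Stdlib Require Import Classical.
From mathcomp Require Import all_boot all_order.
Import Order.Theory.
Local Open Scope order_scope.

Lemma emb_mono {dA} {A : tbLatticeType dA} {dC} {C : tbLatticeType dC} {e : A -> C}
  : lattice_embedding e -> forall a b, a <= b -> e a <= e b.
Proof. case=> _ _ _ eI _ a b /meet_idPl ab; apply/meet_idPl; by rewrite -eI ab. Qed.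

Lemma emb_refl {dA} {A : tbLatticeType dA} {dC} {C : tbLatticeType dC} {e : A -> C}
  : lattice_embedding e -> forall a b, e a <= e b -> a <= b.
Proof. case=> inj _ _ eI _ a b /meet_idPl ab; apply/meet_idPl; apply: inj; by rewrite eI. Qed.

Lemma box_mono {dA} {A : tbLatticeType dA} {dia box : A -> A} :
  is_L_algebra dia box -> forall a b, a <= b -> box a <= box b.
Proof. case=> _ _ _ bI a b /meet_idPl ab; apply/meet_idPl; by rewrite -bI ab. Qed.

Lemma dia_mono {dA} {A : tbLatticeType dA} {dia box : A -> A} :
  is_L_algebra dia box -> forall a b, a <= b -> dia a <= dia b.
Proof. case=> _ dU _ _ a b /join_idPr ab; apply/join_idPr; by rewrite -dU ab. Qed.

Lemma adj_mono {d} {C : tbLatticeType d} {f g : C -> C} :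
  (forall u v : C, f u <= v <-> u <= g v) -> forall u v, u <= v -> f u <= f v.
Proof. move=> adj u v uv; apply/adj; apply: le_trans uv _; exact/adj. Qed.

Lemma emb_meets {dA} {A : tbLatticeType dA} {dC} {C : tbLatticeType dC} {e : A -> C}
  (S : A -> Prop) (k : C) : lattice_embedding e -> is_glb (img e S) k ->
  forall s : seq A, (forall a, a \in s -> S a) -> k <= e (\meet_(a <- s) a).
Proof.
move=> emb [lb _]; elim=> [|a s IH] Hs.
  case: emb => _ _ eT _ _; rewrite big_nil; apply: le_trans (lex1 _) _; rewrite -eT; exact: lexx.
rewrite big_cons; case: (emb) => _ _ _ -> _; rewrite lexI; apply/andP; split.
  apply: lb; exists a; split => //; apply: Hs; exact: mem_head.
apply: IH => b bs; apply: Hs; by rewrite in_cons bs orbT.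
Qed.

Lemma cpl_glb {d} {C : tbLatticeType d} : complete_lattice C -> forall S : C -> Prop, exists x, is_glb S x.
Proof.
move=> cpl S; have [x [ub lst]] := cpl (is_lb S); exists x; split.
  by move=> y Sy; apply: lst => z zl; apply: zl.
by move=> z zl; apply: ub.
Qed.
Lemma box_joins {dA} {A : tbLatticeType dA} {dia box : A -> A} {dC} {C : tbLatticeType dC} {e : A -> C}
  : is_L_algebra dia box -> lattice_embedding e -> forall (o : C) (t : seq A),
  (forall b, b \in t -> exists c, e c <= o /\ b = box c) ->
  exists c, e c <= o /\ \join_(b <- t) b <= box c.
Proof.
move=> L emb o; elim=> [|b t IH] Ht.
  exists \bot; split; last by rewrite big_nil; apply: le0x.
  case: emb => _ -> _ _ _; exact: le0x.
have [c1 [c1o ->]] := Ht b (mem_head _ _).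
have [c2 [c2o le2]] : exists c, e c <= o /\ \join_(b <- t) b <= box c.
  by apply: IH => x xt; apply: Ht; rewrite in_cons xt orbT.
exists (c1 `|` c2); split.
  by case: (emb) => _ _ _ _ ->; rewrite leUx c1o c2o.
rewrite big_cons leUx; apply/andP; split.
  exact: (box_mono L _ _ (leUl c1 c2)).
apply: le_trans le2 _; apply: (box_mono L); exact: leUr.
Qed.

Lemma closed_e {dA} {A : tbLatticeType dA} {dC} {C : tbLatticeType dC} {e : A -> C} b :
  lattice_embedding e -> closed_el e (e b).
Proof.
move=> emb; exists (fun a => a = b); split.
  by move=> y [a [-> ->]].
by move=> z; apply; exists b.
Qed.

Lemma open_e {dA} {A : tbLatticeType dA} {dC} {C : tbLatticeType dC} {e : A -> C} b :
  lattice_embedding e -> open_el e (e b).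
Proof.
move=> emb; exists (fun a => a = b); split.
  by move=> y [a [-> ->]].
by move=> z; apply; exists b.
Qed.

Lemma pi_at_e {dA} {A : tbLatticeType dA} {dia box : A -> A} {dC} {C : tbLatticeType dC} {e : A -> C} {boxp} :
  is_L_algebra dia box -> canonical_extension e -> pi_ext e box boxp ->
  forall b, boxp (e b) <= e (box b) /\ e (box b) <= boxp (e b).
Proof.
move=> L [cpl emb _ _] pi b; split.
  have [x0 hx0] := cpl (fun y => exists a, e a <= e b /\ y = e (box a)).
  have [lb _] := pi (e b).
  apply: le_trans (lb x0 _) _.
    exists (e b); split; first exact: open_e.
    by split.
  case: hx0 => _; apply => y [a [ab ->]].
  apply: (emb_mono emb); apply: (box_mono L); exact: (emb_refl emb).
have [_ gr] := pi (e b); apply: gr => x [o [_ [bo [ub _]]]].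
apply: ub; by exists b.
Qed.

Lemma pi_open {dA} {A : tbLatticeType dA} {box : A -> A} {dC} {C : tbLatticeType dC} {e : A -> C} {boxp} :
  pi_ext e box boxp -> forall o y, open_el e o ->
  is_lub (fun y => exists a, e a <= o /\ y = e (box a)) y -> boxp o <= y.
Proof.
move=> pi o y oo hy; have [lb _] := pi o; apply: lb; exists o; split => //; by split.
Qed.

Lemma diab_closed {dA} {A : tbLatticeType dA} {dia box : A -> A} {dC} {C : tbLatticeType dC} {e : A -> C}
  {boxp diab : C -> C} :
  is_L_algebra dia box -> canonical_extension e -> pi_ext e box boxp ->
  (forall u v : C, diab u <= v <-> u <= boxp v) ->
  forall k, closed_el e k -> closed_el e (diab k).
Proof.
move=> L [cpl emb dns cmp] pi adj k [S0 hk].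
have pe := pi_at_e L (And4 cpl emb dns cmp) pi.
exists (fun a => k <= e (box a)); split.
  move=> y [a [ka ->]]; apply/adj; apply: le_trans ka _; exact: (pe a).2.
move=> z zlb.
have [_ gr] := (dns (diab k)).2; apply: gr => o [[T0 ho] ko].
have [y hy] := cpl (fun y => exists a, e a <= o /\ y = e (box a)).
have koy : k <= y.
  apply: (le_trans _ (pi_open pi _ _ (ex_intro _ T0 ho) hy)); exact/adj.
have hy' : is_lub (img e (fun b => exists c, e c <= o /\ b = box c)) y.
  case: hy => ub lst; split.
    move=> w [b [[c [co ->]] ->]]; apply: ub; by exists c.
  move=> w wub; apply: lst => w' [c [co ->]]; apply: wub; exists (box c); split=> //; by exists c.
have [s [t [Hs [Ht st]]]] := cmp _ _ _ _ hk hy' koy.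
have [c [co tc]] := box_joins L emb _ _ Ht.
have kc : k <= e (box c).
  apply: (le_trans (emb_meets _ _ emb hk _ Hs)); apply: (emb_mono emb); exact: le_trans st tc.
apply: le_trans co; apply: zlb; by exists c.
Qed.

Lemma sig_mono {dA} {A : tbLatticeType dA} {dia : A -> A} {dC} {C : tbLatticeType dC} {e : A -> C}
  {dias : C -> C} : sigma_ext e dia dias -> forall u u', u <= u' -> dias u <= dias u'.
Proof.
move=> sig u u' uu'; apply: (sig u).2 => x [k [kc [ku hx]]].
apply: (sig u').1; exists k; split=> //; split=> //; exact: le_trans ku uu'.
Qed.

Lemma key {dA} {A : tbLatticeType dA} {dia box : A -> A} {dC} {C : tbLatticeType dC} {e : A -> C}
  {dias boxp diab : C -> C} :
  is_L_algebra dia box -> canonical_extension e -> sigma_ext e dia dias -> pi_ext e box boxp ->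
  (forall u v : C, diab u <= v <-> u <= boxp v) ->
  (forall a : A, dia (box a) <= box (dia a)) ->
  forall u, diab (dias u) <= dias (diab u).
Proof.
move=> L ce sig pi adj ax u.
have [cpl emb dns cmp] := ce.
have pe := pi_at_e L ce pi.
apply/adj; apply: (sig u).2 => x [k [kc [ku hx]]].
apply/adj.
apply: (le_trans _ (sig_mono sig _ _ (adj_mono adj _ _ ku))).
have dkc := diab_closed L ce pi adj k kc.
have [g hg] := cpl_glb cpl (fun y => exists a, diab k <= e a /\ y = e (dia a)).
apply: (le_trans _ ((sig (diab k)).1 g _)); last first.
  by exists (diab k); split; [exact: dkc | split; [exact: lexx | exact: hg]].
apply: hg.2 => y [b [kb ->]]; apply/adj.
have kb' : k <= e (box b) by apply: (le_trans _ (pe b).1); exact/adj.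
apply: (le_trans (hx.1 _ (ex_intro _ (box b) (conj kb' erefl)))).
apply: (le_trans _ (pe (dia b)).2); apply: (emb_mono emb); exact: ax.
Qed.

Definition upd {d} {C : tbLatticeType d} (v : @assignment d C) (k : nat) (kv : C) :=
  Assignment (a_var v) (fun i => if i == k then kv else a_nom v i) (a_conom v).

Lemma interp_upd {d} {C : tbLatticeType d} (dias boxp diab black : C -> C) v k kv t :
  ~~ nom_occurs k t -> interp dias boxp diab black (upd v k kv) t = interp dias boxp diab black v t.
Proof.
elim: t => //=.
- by move=> i /negbTE ->.
- by move=> s IHs t IHt; rewrite negb_or => /andP[/IHs -> /IHt ->].
- by move=> s IHs t IHt; rewrite negb_or => /andP[/IHs -> /IHt ->].
- by move=> s IH /IH ->.
- by move=> s IH /IH ->.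
- by move=> s IH /IH ->.
- by move=> s IH /IH ->.
Qed.

Lemma holds_upd {d} {C : tbLatticeType d} (dias boxp diab black : C -> C) v k kv phi :
  ~~ nom_occurs_ineq k phi -> holds dias boxp diab black (upd v k kv) phi <-> holds dias boxp diab black v phi.
Proof.
case: phi => s t /=; rewrite negb_or => /andP[hs ht].
by rewrite !interp_upd.
Qed.

Lemma nocc_in k G phi : ~~ nom_occurs_seq k G -> List.In phi G -> ~~ nom_occurs_ineq k phi.
Proof.
elim: G => //= a G IH; rewrite /nom_occurs_seq /= negb_or => /andP[ha hG] [<-|p] //.
exact: IH.
Qed.

Theorem mainTheorem3
  {dA : Order.disp_t} (A : tbLatticeType dA) (dia box : A -> A)
  {dC : Order.disp_t} (C : tbLatticeType dC) (e : A -> C)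
  (dias boxp diab black : C -> C) (J M : C -> Prop) :
  is_L_algebra dia box ->
  canonical_extension e ->
  sigma_ext e dia dias ->
  pi_ext e box boxp ->
  (forall u v : C, diab u <= v <-> u <= boxp v) ->
  (forall u v : C, dias u <= v <-> u <= black v) ->
  compl_join_generating J ->
  compl_meet_generating M ->
  (forall a : A, dia (box a) <= box (dia a)) ->
  forall (G D : seq ineq) (j h k m : nat),
    k != j -> k != h ->
    ~~ nom_occurs_seq k G -> ~~ nom_occurs_seq k D ->
    seq_valid dias boxp diab black J M
      (G ++ [:: Ineq (TNom k) (TDiab (TNom j))])
      (Ineq (TDia (TNom k)) (TConom m) :: D) ->
    seq_valid dias boxp diab black J M
      (G ++ [:: Ineq (TNom h) (TDia (TNom j))])
      (Ineq (TDiab (TNom h)) (TConom m) :: D).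
Proof.
move=> L ce sig pi adjb adjd Jg Mg ax G D j h k m kj kh nG nD prem v HJ HM HG.
case: (classic (exists psi, List.In psi D /\ holds dias boxp diab black v psi)) => [[psi [pD hp]]| nD'].
  by exists psi; split; [right|].
exists (Ineq (TDiab (TNom h)) (TConom m)); split; first by left.
rewrite /=.
have hj : a_nom v h <= dias (a_nom v j).
  apply: (HG (Ineq (TNom h) (TDia (TNom j)))); apply: List.in_or_app; right; by left.
have step : dias (diab (a_nom v j)) <= a_conom v m.
  apply/adjd; have [_ gr] := Jg (diab (a_nom v j)); apply: gr => kv [Jk kle].
  have H1 : forall i, J (a_nom (upd v k kv) i) by move=> i /=; case: (i == k).
  have H3 : forall phi, List.In phi (G ++ [:: Ineq (TNom k) (TDiab (TNom j))]) ->
      holds dias boxp diab black (upd v k kv) phi.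
    move=> phi Hin; case: (List.in_app_or _ _ _ Hin) => [pG|[Heq|[]]]; last subst phi.
      apply/holds_upd; first exact: nocc_in nG pG.
      apply: HG; apply: List.in_or_app; by left.
    by rewrite /= eqxx eq_sym (negbTE kj).
  have [psi [[<-|pD] hp]] := prem (upd v k kv) H1 HM H3.
    by move: hp; rewrite /= eqxx => /adjd.
  exfalso; apply: nD'; exists psi; split=> //.
  by apply/(holds_upd _ _ _ _ v k kv); first exact: nocc_in nD pD.
apply: le_trans step.
apply: (le_trans _ (key L ce sig pi adjb ax _)).
exact: (adj_mono adjb _ _ hj).
Qed.
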